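(* Let $G_{\max}=(V,E_{\max})$ be a finite, simple, connected, undirected graph, and let $\lambda',\mu',\gamma'>0$ with $\frac{\lambda'}{\mu'}>1$ and $0<\gamma'\le 1$ (Regime III). For a network state $\mathbf{A}$ (a subset $E(\mathbf{A})\subseteq E_{\max}$ of closed edges) let $g(E(\mathbf{A}))$ be the number of $P_3$ subgraphs (paths with 3 vertices) formed by $E(\mathbf{A})$, and call a maximizer of $\pi(\mathbf{A})\propto(\lambda'/\mu')^{|E(\mathbf{A})|}\gamma'^{\,g(E(\mathbf{A}))}$ over all network states a most-probable network (for SUD-DBP). If $\lambda'\gamma'<\mu'$, then the most-probable networks are exactly the network states $\mathbf{A}^*$ with $g(E(\mathbf{A}^* ))=0$ and $|E(\mathbf{A}^* )|$ maximum among such states; equivalently, $E(\mathbf{A}^* )$ is a maximum matching of $G_{\max}$.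
   Context: A matching of a graph is a set of edges no two of which share a vertex; a maximum matching is a matching with the largest possible number of edges. *)

(* Defs.v *)
From HB Require Import structures.
From mathcomp Require Import all_boot all_order all_algebra.
Set Implicit Arguments. Unset Strict Implicit. Unset Printing Implicit Defensive.
Import Order.TTheory GRing.Theory Num.Theory.

(* A finite simple undirected graph on vertex type V is given by its edge set
   Emax : {set {set V}}, every edge being a 2-element vertex set. *)
Definition simple_graph (V : finType) (Emax : {set {set V}}) : Prop :=
  forall e, e \in Emax -> #|e| = 2.

Definition adj (V : finType) (Emax : {set {set V}}) : rel V :=
  fun x y => [set x; y] \in Emax.

Definition connected_graph (V : finType) (Emax : {set {set V}}) : Prop :=
  forall x y : V, connect (adj Emax) x y.

(* g(E): the number of P3 subgraphs formed by the edge set E, i.e. the number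
   of unordered pairs of distinct edges of E sharing a vertex. *)
Definition gP3 (V : finType) (E : {set {set V}}) : nat :=
  #|[set P : {set {set V}} | [&& P \subset E, #|P| == 2 &
      [exists e1 in P, exists e2 in P, (e1 != e2) && ~~ [disjoint e1 & e2]]]]|.

Definition weight (R : realFieldType) (lam mu gam : R) (V : finType)
  (E : {set {set V}}) : R :=
  ((lam / mu) ^+ #|E| * gam ^+ gP3 E)%R.

Definition most_probable (R : realFieldType) (lam mu gam : R) (V : finType)
  (Emax A : {set {set V}}) : Prop :=
  A \subset Emax /\
  forall B : {set {set V}}, B \subset Emax -> (weight lam mu gam B <= weight lam mu gam A)%R.

Definition is_matching (V : finType) (Emax M : {set {set V}}) : Prop :=
  M \subset Emax /\
  forall e1 e2, e1 \in M -> e2 \in M -> e1 != e2 -> [disjoint e1 & e2].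

Definition is_maximum_matching (V : finType) (Emax M : {set {set V}}) : Prop :=
  is_matching Emax M /\ forall N, is_matching Emax N -> #|N| <= #|M|.

(* Main.v *)
Require Import Defs.
From mathcomp Require Import all_boot all_order all_algebra.
Import Order.TTheory GRing.Theory Num.Theory.
Local Open Scope ring_scope.

Definition P3set (V : finType) (E : {set {set V}}) :=
  [set P : {set {set V}} | [&& P \subset E, #|P| == 2 &
      [exists e1 in P, exists e2 in P, (e1 != e2) && ~~ [disjoint e1 & e2]]]].
Arguments P3set {V} E.

Lemma gP3_0P (V : finType) (E : {set {set V}}) :
  gP3 E = 0%N <->
  forall e1 e2, e1 \in E -> e2 \in E -> e1 != e2 -> [disjoint e1 & e2].
Proof.
rewrite /gP3; split.
  move=> H e1 e2 h1 h2 ne; apply/negPn/negP => nd.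
  have : [set e1; e2] \in P3set E.
    rewrite inE; apply/and3P; split.
    - by apply/subsetP => x; rewrite !inE => /orP[] /eqP ->.
    - by rewrite cards2 ne.
    - apply/existsP; exists e1; rewrite !inE eqxx /=.
      apply/existsP; exists e2; by rewrite !inE eqxx orbT ne nd.
  change (#|P3set E| = 0%N) in H.
  by move=> Hin; rewrite (card0_eq H) in Hin.
move=> H; apply/eqP; rewrite cards_eq0; apply/eqP/setP => P; rewrite !inE.
apply/negbTE/negP => /and3P[sPE _ /existsP[e1 /andP[i1 /existsP[e2 /andP[i2 /andP[ne nd]]]]]].
by rewrite H // in nd; apply: (subsetP sPE).
Qed.

Lemma gP3_remove (V : finType) (B : {set {set V}}) e1 e2 :
  e1 \in B -> e2 \in B -> e1 != e2 -> ~~ [disjoint e1 & e2] ->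
  (gP3 (B :\ e1) < gP3 B)%N.
Proof.
move=> h1 h2 ne nd; rewrite /gP3; apply: proper_card; apply/properP; split.
  apply/subsetP => P; rewrite !inE => /and3P[sP -> ->]; apply/andP; split => //.
  exact: subset_trans sP (subD1set _ _).
exists [set e1; e2].
  rewrite inE; apply/and3P; split.
  - by apply/subsetP => x; rewrite !inE => /orP[] /eqP ->.
  - by rewrite cards2 ne.
  - apply/existsP; exists e1; rewrite !inE eqxx /=.
    apply/existsP; exists e2; by rewrite !inE eqxx orbT ne nd.
rewrite inE; apply/negP => /and3P[/subsetP s _ _].
by move: (s e1); rewrite !inE eqxx /= => /(_ isT).
Qed.

Section W.
Variables (R : realFieldType) (lam mu gam : R).
Hypotheses (hl : 0 < lam) (hm : 0 < mu) (hg : 0 < gam) (hr : 1 < lam / mu)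
  (hg1 : gam <= 1) (hlg : lam * gam < mu).

Lemma reduce (V : finType) (B : {set {set V}}) :
  exists M : {set {set V}}, [/\ M \subset B, gP3 M = 0%N, weight lam mu gam B <= weight lam mu gam M
    & gP3 B != 0%N -> weight lam mu gam B < weight lam mu gam M].
Proof.
move: {2}#|B| (leqnn #|B|) => n; elim: n B => [|n IH] B hB.
  have -> : B = set0 by apply/eqP; rewrite -cards_eq0; rewrite leqn0 in hB.
  have g0 : gP3 (set0 : {set {set V}}) = 0%N by apply/gP3_0P => e1; rewrite inE.
  by exists set0; split => //; rewrite g0.
case: (boolP (gP3 B == 0%N)) => [/eqP h0|hn0].
  by exists B; split; rewrite ?h0 ?eqxx.
have : ~ (gP3 B = 0%N) by move=> h; rewrite h in hn0.
move/gP3_0P => H.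
case: (boolP [exists e1 in B, exists e2 in B, (e1 != e2) && ~~ [disjoint e1 & e2]]);
  last first.
  move=> /negP N; exfalso; apply: H => e1 e2 h1 h2 ne; apply/negPn/negP => nd.
  apply: N; apply/existsP; exists e1; rewrite h1 /=; apply/existsP; exists e2.
  by rewrite h2 ne nd.
move=> /existsP[e1 /andP[h1 /existsP[e2 /andP[h2 /andP[ne nd]]]]].
have lt := @gP3_remove _ _ _ _ h1 h2 ne nd.
have cB : #|B| = #|B :\ e1|.+1 by rewrite (cardsD1 e1 B) h1.
have hB1 : (#|B :\ e1| <= n)%N by rewrite -ltnS -cB.
have [M [sM gM wM _]] := IH (B :\ e1) hB1.
have wlt : weight lam mu gam B < weight lam mu gam (B :\ e1).
  rewrite /weight cB exprSr.
  set r := lam / mu.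
  have r0 : 0 < r by rewrite divr_gt0.
  have rg : r * gam < 1 by rewrite /r mulrAC ltr_pdivrMr // mul1r.
  apply: (@le_lt_trans _ _ (r ^+ #|B :\ e1| * gam ^+ (gP3 (B :\ e1)) * (r * gam))).
    rewrite -mulrA [X in _ <= X]mulrAC -mulrA ler_pM2l ?exprn_gt0 //.
    rewrite [X in _ <= X]mulrC mulrCA ler_pM2l // mulrC -exprS; apply: ler_wiXn2l => //; exact: ltW.
  by rewrite gtr_pMr ?mulr_gt0 ?exprn_gt0.
exists M; split => //.
- exact: subset_trans sM (subD1set _ _).
- exact: ltW (lt_le_trans wlt wM).
- by move=> _; exact: lt_le_trans wlt wM.
Qed.

End W.
Arguments reduce {R lam mu gam} _ _ _ _ _ {V} B.

Lemma matchingE (V : finType) (Emax B : {set {set V}}) :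
  is_matching Emax B <-> B \subset Emax /\ gP3 B = 0%N.
Proof.
rewrite /is_matching; split => -[s H]; split => //; first by apply/gP3_0P.
by apply/gP3_0P.
Qed.

Theorem theorem6 (R : realFieldType) (V : finType) (Emax : {set {set V}})
  (lam mu gam : R) :
  simple_graph Emax -> connected_graph Emax ->
  0 < lam -> 0 < mu -> 0 < gam -> 1 < lam / mu -> gam <= 1 ->
  lam * gam < mu ->
  forall A : {set {set V}},
    (most_probable lam mu gam Emax A <->
       [/\ A \subset Emax, gP3 A = 0%N &
           forall B : {set {set V}}, B \subset Emax -> gP3 B = 0%N ->
             (#|B| <= #|A|)%N]) /\
    (most_probable lam mu gam Emax A <-> is_maximum_matching Emax A).
Proof.
move=> _ _ hl hm hg hr hg1 hlg A.
have wE (B : {set {set V}}) : gP3 B = 0%N -> weight lam mu gam B = (lam / mu) ^+ #|B|.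
  by move=> h; rewrite /weight h expr0 mulr1.
have E1 : most_probable lam mu gam Emax A <->
       [/\ A \subset Emax, gP3 A = 0%N &
           forall B : {set {set V}}, B \subset Emax -> gP3 B = 0%N ->
             (#|B| <= #|A|)%N].
  split.
    move=> [sA H].
    have gA : gP3 A = 0%N.
      apply/eqP/negP => /negP hn.
      have [M [sM _ _ /(_ hn) lt]] := reduce hl hm hg hg1 hlg A.
      have := H M (subset_trans sM sA); by rewrite leNgt lt.
    split => // B sB gB; have := H B sB.
    by rewrite (wE _ gB) (wE _ gA) ler_eXn2l.
  move=> [sA gA H]; split => // B sB.
  have [M [sM gM wM _]] := reduce hl hm hg hg1 hlg B.
  apply: le_trans wM _; rewrite (wE _ gM) (wE _ gA) ler_eXn2l //.
  exact: H (subset_trans sM sB) gM.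
split => //; split.
  move=> /E1 [sA gA H]; split; first by apply/matchingE.
  by move=> N /matchingE [sN gN]; apply: H.
move=> [/matchingE [sA gA] H]; apply/E1; split => // B sB gB; apply: H; exact/matchingE.
Qed.
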